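(* Let $q$ be a prime power, $r$ a prime with $r\mid(q-1)$ and $r\ge3$, and $q/2\le\ell\le q-1$. The quantum Tamo–Barg code $\mathrm{CSS}(C,C)$ with parameters $q,r,\ell$ has distance at least \[ d=(q-1)\left(1-\frac{1}{2r}-\sqrt{\frac{1}{4r^2}+\frac{r-1}{r}\cdot\frac{\ell-1}{q-1}}\right). \]
   Context: $[n]=\{0,\dots,n-1\}$, $\mathbb{F}_q^*=\mathbb{F}_q\setminus\{0\}$. For $S\subseteq\mathbb{Z}_{\ge0}$, $\mathbb{F}_q[X]^S=\{\sum_{i\in S}a_iX^i\}$, $\mathrm{ev}(f)=(f(x))_{x\in\mathbb{F}_q^*}$. Let $S=\{i\in[\ell]:i\not\equiv r-1\pmod r\}\cup\{i\in[q-1]:i\equiv1\pmod r\}$, $C=\mathrm{ev}(\mathbb{F}_q[X]^S)\subseteq\mathbb{F}_q^{q-1}$; for $\ell\ge q/2$, $C^\perp\subseteq C$ and the quantum Tamo–Barg code is the CSS code $\mathrm{CSS}(C,C)=\mathrm{span}\{\sum_{y\in C^\perp}|x+y\rangle:x\in C\}$. Its distance is $\min\{|c|:c\in C\setminus C^\perp\}$, $|c|$ the Hamming weight. *)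

(* Defs.v *)
From HB Require Import structures.
From mathcomp Require Import all_boot all_order all_algebra all_field.
Set Implicit Arguments. Unset Strict Implicit. Unset Printing Implicit Defensive.
Import Order.TTheory GRing.Theory Num.Theory.
Local Open Scope ring_scope.

Definition word (F : finFieldType) := {ffun {unit F} -> F}.

Definition ev (F : finFieldType) (f : {poly F}) : word F :=
  [ffun u : {unit F} => f.[val u]].

Definition TB_S (q r l : nat) (i : nat) : bool :=
  ((i < l)%N && (i %% r != (r - 1) %% r)%N) || ((i < q - 1)%N && (i %% r == 1 %% r)%N).

Definition inTB (F : finFieldType) (r l : nat) (c : word F) : Prop :=
  exists f : {poly F}, (forall i, f`_i != 0 -> TB_S #|F| r l i) /\ c = ev f.

Definition inTB_dual (F : finFieldType) (r l : nat) (y : word F) : Prop :=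
  forall x : word F, inTB r l x -> \sum_(u : {unit F}) x u * y u = 0.

Definition wt (F : finFieldType) (c : word F) : nat := #|[set u | c u != 0]|.

(* Main.v *)
Require Import Defs.
From HB Require Import structures.
From mathcomp Require Import all_boot all_order all_algebra all_field.
From mathcomp Require Import all_fingroup all_solvable zify ring lra.
Import Order.TTheory GRing.Theory Num.Theory.
Local Open Scope ring_scope.

Module TBHelpers.
Set Implicit Arguments. Unset Strict Implicit.


Section Helpers.
Variable F : finFieldType.
Local Notation U := {unit F}.

Lemma ord_in_cycle (r : nat) (x w : U) : prime r -> #[x]%g = r ->
  w \in <[x]>%g -> w != 1%g -> #[w]%g = r.
Proof.
move=> pr ox wx w1.
have : (#[w]%g %| r)%N by rewrite -ox orderE; apply: order_dvdG.
case/primeP: pr => _ /[apply] /orP [|/eqP //].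
by rewrite order_eq1 (negPf w1).
Qed.

Lemma val_expr_mod (r : nat) (w : U) (j : nat) : #[w]%g = r ->
  (val w) ^+ j = (val w) ^+ (j %% r).
Proof. by move=> ow; rewrite -!FinRing.val_unitX -ow expg_mod_order. Qed.

Lemma val_expr_neq (r : nat) (w : U) (i : nat) : prime r -> #[w]%g = r ->
  (i %% r != 1)%N -> (val w) ^+ i != val w.
Proof.
move=> pr ow; apply: contra => /eqP E.
have E' : (w ^+ i = w)%g by apply: val_inj; rewrite FinRing.val_unitX.
have r1 := prime_gt1 pr.
case: i E E' => [|k] E E'.
  by move: E'; rewrite expg0 => /esym/eqP; rewrite -order_eq1 ow; case: (r) r1 => [|[]].
have : (w ^+ k = 1)%g.
  by apply: (mulgI w); rewrite mulg1 -expgS.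
move/eqP; rewrite -order_dvdn ow => /dvdnP [m ->].
by rewrite -addn1 modnMDl modn_small.
Qed.

Lemma sumX0 (r : nat) (x : U) (k : nat) : #[x]%g = r -> ~~ (r %| k)%N ->
  \sum_(u : U) (val u) ^+ k = 0.
Proof.
move=> ox nd.
have ak : (val x) ^+ k != 1.
  rewrite -FinRing.val_unitX -FinRing.val_unit1; apply/eqP => /val_inj/eqP.
  by rewrite -order_dvdn ox (negPf nd).
have E : \sum_(u : U) (val u) ^+ k = (val x) ^+ k * \sum_(u : U) (val u) ^+ k.
  rewrite {1}(reindex_inj (mulgI x)) mulr_sumr; apply: eq_bigr => u _.
  by rewrite FinRing.val_unitM exprMn.
have : (1 - val x ^+ k) * \sum_(u : U) (val u) ^+ k = 0 by rewrite mulrBl mul1r -E subrr.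
by move/eqP; rewrite mulf_eq0 subr_eq0 eq_sym (negPf ak) /= => /eqP.
Qed.

End Helpers.



Lemma ndiv (r q l i j : nat) : (2 < r)%N -> TB_S q r l i -> (j %% r == 1)%N ->
  ~~ (r %| i + j)%N.
Proof.
move=> r2; rewrite /TB_S (@modn_small (r - 1)) ?(@modn_small 1); try lia.
have lt := ltn_mod i r.
move=> /orP [/andP [_ Hi] | /andP [_ /eqP Hi]] /eqP Hj; rewrite /dvdn -modnDm Hj.
  rewrite modn_small; lia.
rewrite Hi modn_small; lia.
Qed.

Lemma dual1 (F : finFieldType) (r l : nat) (x : {unit F}) (f : {poly F}) :
  (2 < r)%N -> #[x]%g = r ->
  (forall i, f`_i != 0 -> (i %% r == 1)%N) -> inTB_dual r l (ev f).
Proof.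
move=> r2 ox Hf y [g [Hg ->]].
rewrite (eq_bigr (fun u : {unit F} => \sum_(i < size g) \sum_(j < size f)
   (g`_i * f`_j) * (val u)^+(i+j))); last first.
  move=> u _; rewrite !ffunE !horner_coef mulr_suml; apply: eq_bigr => i _.
  rewrite mulr_sumr; apply: eq_bigr => j _; by rewrite exprD mulrACA.
rewrite exchange_big; apply: big1 => i _; rewrite exchange_big; apply: big1 => j _.
rewrite -mulr_sumr.
have [gi0|gi0] := eqVneq g`_i 0; first by rewrite gi0 !mul0r.
have [fj0|fj0] := eqVneq f`_j 0; first by rewrite fj0 mulr0 mul0r.
by rewrite (@sumX0 _ _ _ _ ox) ?mulr0 // (@ndiv r _ _ _ _ r2 (Hg _ gi0) (Hf _ fj0)).
Qed.



Lemma cs_real (R : realDomainType) (I : finType) (b : I -> R) :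
  (\sum_i b i) ^+ 2 <= #|I|%:R * \sum_i (b i) ^+ 2.
Proof.
set S := \sum_i b i; set Q := \sum_i (b i) ^+ 2.
have E1 i : \sum_j (b i - b j) ^+ 2 = #|I|%:R * b i ^+ 2 - 2 * b i * S + Q.
  under eq_bigr do rewrite sqrrB.
  rewrite big_split /= sumrB sumr_const /S /Q mulr_sumr.
  rewrite mulr_natl; congr (_ - _ + _); apply: eq_bigr => j _; by rewrite -mulrA mulr_natl.
have E2 : \sum_i \sum_j (b i - b j) ^+ 2 = (#|I|%:R * Q - S ^+ 2) *+ 2.
  under eq_bigr do rewrite E1.
  rewrite !big_split /= sumrN sumr_const -mulr_sumr -!mulr_suml.
  rewrite -mulr_sumr -/S -/Q (_ : Q *+ _ = #|I|%:R * Q); last by rewrite mulr_natl. rewrite mulr2n expr2; clearbody S Q; move: (#|I|%:R : R) => k; ring.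
have : 0 <= \sum_i \sum_j (b i - b j) ^+ 2.
  by apply: sumr_ge0 => i _; apply: sumr_ge0 => j _; apply: sqr_ge0.
by rewrite E2 pmulrn_lge0 // subr_ge0.
Qed.

Lemma cs_nat (I : finType) (a : I -> nat) :
  ((\sum_i a i) ^ 2 <= #|I| * \sum_i (a i) ^ 2)%N.
Proof.
rewrite -(ler_nat int) natrX natrM !natr_sum.
under [X in _ <= _ * X]eq_bigr do rewrite natrX.
exact: cs_real.
Qed.



Section Count.
Variables (F : finFieldType) (r l : nat) (x : {unit F}) (f : {poly F}) (i0 : nat).
Hypotheses (pr : prime r) (ox : #[x]%g = r)
  (Hf : forall i, f`_i != 0 -> TB_S #|F| r l i)
  (fi0 : f`_i0 != 0) (i0r : (i0 %% r != 1)%N).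

Let Z : {set {unit F}} := [set u | f.[val u] == 0].
Let mu := <[x]>%g.

Lemma roots_bound (w : {unit F}) : w \in mu -> w != 1%g ->
  (#|[set u in Z | (w * u)%g \in Z]| <= l.-1)%N.
Proof.
move=> wmu w1.
have ow : #[w]%g = r by exact: (ord_in_cycle pr ox wmu w1).
have r1 := prime_gt1 pr.
set z := val w.
pose g := \poly_(i < size f) (f`_i * (z - z ^+ i)).
have i0s : (i0 < size f)%N.
  by case: ltnP => // H; move: fi0; rewrite nth_default ?eqxx.
have gnz : g != 0.
  apply/eqP => g0; have : g`_i0 = 0 by rewrite g0 coef0.
  rewrite coef_poly i0s => /eqP; rewrite mulf_eq0 (negPf fi0) /= subr_eq0 eq_sym.
  by rewrite (negPf (val_expr_neq pr ow i0r)).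
have sg : (size g <= l)%N.
  apply/leq_sizeP => j lj; rewrite coef_poly; case: ifP => // _.
  have [fj0|fj0] := eqVneq f`_j 0; first by rewrite fj0 mul0r.
  move: (Hf fj0); rewrite /TB_S => /orP [/andP [jl _]| /andP [_ /eqP jm]].
    by rewrite leqNgt jl in lj.
  by rewrite /z (val_expr_mod j ow) jm -(val_expr_mod 1 ow) expr1 subrr mulr0.
set A := [set u in Z | (w * u)%g \in Z].
have := @max_poly_roots _ g (map val (enum A)) gnz.
rewrite size_map -cardE map_inj_uniq ?enum_uniq //; last exact: val_inj.
move=> H; have {}H : (#|A| < size g)%N.
  apply: H => //; apply/allP => t /mapP [u]; rewrite mem_enum !inE => /andP [uZ wuZ] ->.
  rewrite /root horner_poly.
  have -> : \sum_(i < size f) f`_i * (z - z ^+ i) * (val u) ^+ i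
      = z * f.[val u] - f.[z * val u].
    rewrite !horner_coef mulr_sumr -sumrB; apply: eq_bigr => i _.
    rewrite exprMn; ring.
  by rewrite (eqP uZ) -FinRing.val_unitM (eqP wuZ) mulr0 subr0.
by move: H sg; clear; lia.
Qed.


Let h (u : {unit F}) := (\sum_(w in mu) (((w * u)%g \in Z) : nat))%N.

Lemma sum_bool_card (A : {set {unit F}}) :
  (\sum_(u : {unit F}) ((u \in A) : nat))%N = #|A|.
Proof. by rewrite -sum1_card [RHS]big_mkcond /=; apply: eq_bigr => u _; case: (u \in A). Qed.

Lemma shiftZ (w : {unit F}) :
  (\sum_(u : {unit F}) (((w * u)%g \in Z) : nat))%N = #|Z|.
Proof. by rewrite -sum_bool_card [RHS](reindex_inj (mulgI w)). Qed.

Lemma card_mu : #|mu| = r.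
Proof. by rewrite -orderE. Qed.

Lemma sumh : (\sum_u h u = r * #|Z|)%N.
Proof.
rewrite /h exchange_big /=.
rewrite (eq_bigr (fun _ => #|Z|)); last by move=> w _; rewrite shiftZ.
by rewrite sum_nat_const card_mu.
Qed.

Lemma hM (w u : {unit F}) : w \in mu -> h (w * u)%g = h u.
Proof.
move=> wmu; rewrite /h; symmetry; rewrite (reindex_inj (mulIg w)) /=.
by apply: eq_big => v; [rewrite groupMr | rewrite mulgA].
Qed.

Let P := (\sum_(u in Z) h u)%N.

Lemma sumZh : (\sum_u ((u \in Z) : nat) * h u)%N = P.
Proof. by rewrite /P [RHS]big_mkcond /=; apply: eq_bigr => u _; case: (u \in Z); rewrite ?mul1n ?mul0n. Qed.

Lemma sumh2 : (\sum_u (h u) ^ 2 = r * P)%N.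
Proof.
rewrite (eq_bigr (fun u => \sum_(w in mu) (((w * u)%g \in Z) : nat) * h (w * u)%g)%N);
  last first.
  move=> u _; rewrite expnS expn1 {1}/h big_distrl /=.
  by apply: eq_bigr => w wmu; rewrite hM.
rewrite exchange_big /=.
rewrite (eq_bigr (fun _ => P)); first by rewrite sum_nat_const card_mu.
move=> w _; rewrite -sumZh.
by rewrite [RHS](reindex_inj (mulgI w)).
Qed.

Lemma Pbound : (P <= #|Z| + (r - 1) * l.-1)%N.
Proof.
rewrite /P /h exchange_big /= (bigD1 1%g) ?group1 //=.
rewrite (eq_bigr (fun _ => 1%N)); last by move=> u uZ; rewrite mul1g uZ.
rewrite sum1_card leq_add2l.
apply: (@leq_trans (\sum_(w | (w \in mu) && (w != 1%g)) l.-1)%N).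
  apply: leq_sum => w /andP [wmu w1].
  apply: leq_trans (roots_bound wmu w1).
  rewrite -sum1dep_card big_mkcondr /=.
  by apply: leq_sum => u _; case: (_ \in Z).
rewrite sum_nat_const leq_mul2r; apply/orP; right.
have := cardD1 1%g mu; rewrite group1 card_mu => ->.
rewrite add1n subn1 /= leq_eqVlt; apply/orP; left; apply/eqP; apply: eq_card => w; rewrite !inE andbC. by [].
Qed.

Lemma key : (r * #|Z| ^ 2 <= #|{: {unit F}}| * (#|Z| + (r - 1) * l.-1))%N.
Proof.
have r0 : (0 < r)%N by apply: prime_gt0.
have := cs_nat h; rewrite sumh sumh2.
rewrite expnMn mulnCA expnS expn1 -mulnA leq_pmul2l // => H.
apply: leq_trans H _; rewrite leq_mul2l; apply/orP; right; exact: Pbound.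
Qed.

End Count.



Lemma final_ineq (R : rcfType) (n N r l1 : nat) : (0 < r)%N -> (0 < n)%N -> (N <= n)%N ->
  (r * N ^ 2 <= n * (N + (r - 1) * l1))%N ->
  n%:R * (1 - 1 / (2 * r)%:R
      - Num.sqrt (1 / (4 * r ^ 2)%:R + (r - 1)%:R / r%:R * (l1%:R / n%:R)))
    <= (n - N)%:R :> R.
Proof.
move=> r0 n0 Nn H.
rewrite !natrM !natrB //.
move: H; rewrite -(ler_nat R) !natrM natrD natrM natrB //.
have a0 : 0 < r%:R :> R by rewrite ltr0n.
have a1 : 1 <= r%:R :> R by rewrite ler1n.
have b0 : 0 < n%:R :> R by rewrite ltr0n.
have L0 : 0 <= l1%:R :> R by rewrite ler0n.
move: a1 a0 b0 L0; move: (r%:R : R) (n%:R : R) (N%:R : R) (l1%:R : R) => a b c L a1 a0 b0 L0 H.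
set s := Num.sqrt _.
have s0 : 0 <= s by apply: sqrtr_ge0.
suff K : c - b / (2 * a) <= b * s.
  rewrite -subr_ge0 (_ : b - c - _ = b * s - (c - b / (2 * a))) ?subr_ge0 //.
  by field; rewrite lt0r_neq0.
have [neg|pos] := lerP (c - b / (2 * a)) 0.
  by apply: le_trans neg _; apply: mulr_ge0 => //; apply: ltW.
have -> : b * s = Num.sqrt (b ^+ 2 * (1 / (4 * (a * a)) + (a - 1) / a * (L / b))).
  by rewrite sqrtrM ?sqr_ge0 // sqrtr_sqr ger0_norm // ltW.
rewrite -(ger0_norm (ltW pos)) -sqrtr_sqr ler_sqrt; last first.
  apply: mulr_ge0; first exact: sqr_ge0.
  apply: addr_ge0; first by rewrite divr_ge0 // ltW // mulr_gt0 // mulr_gt0.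
  by rewrite mulr_ge0 // divr_ge0 // ?subr_ge0 // ltW.
rewrite -subr_ge0.
have -> : b ^+ 2 * (1 / (4 * (a * a)) + (a - 1) / a * (L / b)) - (c - b / (2 * a)) ^+ 2
   = (b * (c + (a - 1) * L) - a * c ^+ 2) / a.
  by field; rewrite ?lt0r_neq0.
by apply: divr_ge0; [rewrite subr_ge0 | apply: ltW].
Qed.


End TBHelpers.
Import TBHelpers.

Theorem theorem6p2 (R : rcfType) (F : finFieldType) (r l : nat) :
  prime r -> (r %| #|F| - 1)%N -> (3 <= r)%N ->
  (#|F| <= 2 * l)%N -> (l <= #|F| - 1)%N ->
  forall c : word F, inTB r l c -> ~ inTB_dual r l c ->
  (#|F| - 1)%:R * (1 - 1 / (2 * r)%:R
      - Num.sqrt (1 / (4 * r ^ 2)%:R + (r - 1)%:R / r%:R * ((l - 1)%:R / (#|F| - 1)%:R)))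
    <= (wt c)%:R :> R.
Proof.
move=> pr rdiv r3 _ _ c [f [Hf ->]] nd.
have cardU : #|[set: {unit F}]| = (#|F| - 1)%N by rewrite card_finField_unit subn1.
have [x _ ox] := @Cauchy _ r [set: {unit F}]%G pr (etrans (f_equal _ cardU) rdiv).
have r2 : (2 < r)%N by [].
have [i0 fi0 i0r] : exists2 i0, f`_i0 != 0 & (i0 %% r != 1)%N.
  case: (boolP [exists i : 'I_(size f), (f`_i != 0) && (i %% r != 1)%N]).
    by case/existsP => i /andP [fi ir]; exists i.
  rewrite negb_exists => /forallP Hn; exfalso; apply: nd.
  apply: (dual1 r2 ox) => i fi.
  have isz : (i < size f)%N by case: ltnP => // H; move: fi; rewrite nth_default ?eqxx.
  by have := Hn (Ordinal isz); rewrite fi /= negbK.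
have K := key pr ox Hf fi0 i0r.
set N := #|[set u | f.[val u] == 0]| in K.
have wtE : wt (ev f) = (#|F| - 1 - N)%N.
  rewrite /wt -cardU cardsT -(cardsC [set u : {unit F} | f.[val u] == 0]) addKn.
  by apply: eq_card => u; rewrite !inE ffunE.
rewrite wtE; apply: final_ineq.
- exact: prime_gt0.
- by rewrite -cardU; apply/card_gt0P; exists 1%g; rewrite inE.
- by rewrite -cardU cardsT max_card.
- by move: K; rewrite -cardsT cardU !subn1.
Qed.
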